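(* Let $R>0$, $D>0$ and $k\ge0$ an integer. There exists an algorithm $\mathcal A\in\mathfrak A_{\mathrm{lin}}$ such that for every $m\ge1$, every $\mathbf B\in\mathbb R^{m\times m}$ with $\|\mathbf B\|\le R$, and every $\mathbf v=\mathbf B\mathbf z^\star$ with $\|\mathbf z^\star\|\le D$, the iterate $\mathbf z^k$ produced by $\mathcal A$ satisfies $$\|\mathbf B\mathbf z^k-\mathbf v\|^2\le\frac{R^2D^2}{(2\lfloor k/2\rfloor+1)^2}.$$
   Context: $\mathfrak A_{\mathrm{lin}}$ is the class of iterative algorithms for a linear equation $\mathbf B\mathbf z=\mathbf v$ that access $\mathbf B$ only through products with $\mathbf B$ and $\mathbf B^\intercal$, in the sense that $\mathbf z^k\in\mathrm{span}\{\mathbf v^0,\dots,\mathbf v^k\}$, where $\mathbf v^0=0$, $\mathbf v^1=\mathbf v$, and for each $j\ge2$, $\mathbf v^j=\mathbf B\mathbf v^i$ or $\mathbf v^j=\mathbf B^\intercal\mathbf v^i$ for some $i\in\{0,\dots,j-1\}$. $\|\mathbf B\|$ is the spectral norm. *)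

(* Defs.v *)
From HB Require Import structures.
From mathcomp Require Import all_boot all_order all_algebra.
From mathcomp Require Import classical_sets reals.
Set Implicit Arguments. Unset Strict Implicit. Unset Printing Implicit Defensive.
Import Order.TTheory GRing.Theory Num.Theory.
Local Open Scope ring_scope.
Local Open Scope classical_set_scope.

Definition vnorm (R : realType) (m : nat) (x : 'cV[R]_m) : R :=
  Num.sqrt (\sum_(i < m) x i 0 ^+ 2).

Definition specnorm (R : realType) (m : nat) (B : 'M[R]_m) : R :=
  sup [set vnorm (B *m x) | x in [set x : 'cV[R]_m | vnorm x <= 1]].

(* An iterative algorithm for B z = v: given the dimension m, the matrix B
   and the right-hand side v, it returns the sequence of iterates z^k. *)
Definition algorithm (R : realType) :=
  forall (m : nat), 'M[R]_m -> 'cV[R]_m -> nat -> 'cV[R]_m.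

Definition in_A_lin (R : realType) (A : algorithm R) : Prop :=
  forall (m : nat) (B : 'M[R]_m) (v : 'cV[R]_m),
    exists vs : nat -> 'cV[R]_m,
      [/\ vs 0%N = 0, vs 1%N = v,
          (forall j : nat, (2 <= j)%N ->
             exists2 i : nat, (i < j)%N &
               vs j = B *m vs i \/ vs j = B^T *m vs i) &
          (forall k : nat, exists c : 'I_k.+1 -> R,
             A m B v k = \sum_(i < k.+1) c i *: vs i)].

(* Main.v *)
Require Import Defs.
From HB Require Import structures.
From mathcomp Require Import all_boot all_order all_algebra.
From mathcomp Require Import classical_sets reals.
From mathcomp Require Import ring lra zify.
Import Order.TTheory GRing.Theory Num.Theory.
Set Implicit Arguments. Unset Strict Implicit. Unset Printing Implicit Defensive.
Local Open Scope ring_scope.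

Fixpoint au (R : realType) (j : nat) : {poly R} * {poly R} :=
  match j with
  | 0 => (1, 1)
  | j'.+1 => let: (a, u) := au R j' in
      (('X *+ 2 - 1) * a + ('X - 1) *+ 2 * u, 'X *+ 2 * a + ('X *+ 2 - 1) * u)
  end.

Lemma au_id (R : realType) j :
  'X * (au R j).1 ^+ 2 + (1 - 'X) * (au R j).2 ^+ 2 = 1.
Proof.
elim: j => [|j IH] /=; first by ring.
move: IH; case: (au R j) => a u /= IH.
rewrite -[RHS]IH; ring.
Qed.

Lemma au_0 (R : realType) j :
  (au R j).1.[0] = (-1) ^+ j * (2 * j + 1)%:R /\ (au R j).2.[0] = (-1) ^+ j.
Proof.
elim: j => [|j IH] /=; first by rewrite !hornerE.
move: IH; case: (au R j) => a u /= [Ha Hu].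
rewrite !(hornerMn, hornerE) Ha Hu !exprS !natrD !natrM ?mulrS; split; ring.
Qed.

Lemma size_lin (R : realType) (c d : R) (a : {poly R}) n :
  (size a <= n)%N -> (size ((c *: 'X + d%:P) * a)%R <= n.+1)%N.
Proof.
move=> Ha; have H1 := size_polyMleq (c *: 'X + d%:P)%R a.
have H2 : (size (c *: 'X + d%:P)%R <= 2)%N.
  apply: leq_trans (size_polyD _ _) _; rewrite geq_max.
  by rewrite (leq_trans (size_scale_leq _ _)) ?size_polyX // (leq_trans (size_polyC_leq1 _)).
apply: (leq_trans H1); move: H2 Ha; move: (size (c *: 'X + d%:P)%R) (size a) => s t; lia.
Qed.

Lemma au_size (R : realType) j :
  (size (au R j).1 <= j.+1)%N /\ (size (au R j).2 <= j.+1)%N.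
Proof.
elim: j => [|j IH] /=; first by rewrite size_poly1.
move: IH; case: (au R j) => a u /= [Ha Hu].
have E1 : 'X *+ 2 - 1 = 2 *: 'X + (-1)%:P :> {poly R}.
  by rewrite scaler_nat polyCN polyC1.
have E2 : ('X - 1) *+ 2 = 2 *: 'X + (-2)%:P :> {poly R}.
  by rewrite scaler_nat polyCN polyC_natr mulrnBl.
have E3 : 'X *+ 2 = 2 *: 'X + 0%:P :> {poly R}.
  by rewrite scaler_nat addr0.
rewrite E1 E2 E3; split; apply: leq_trans (size_polyD _ _) _;
  by rewrite geq_max !size_lin.
Qed.
Definition pp (R : realType) n : {poly R} := ((au R n).1.[0])^-1 *: (au R n).1.
Definition gg (R : realType) n : {poly R} := drop_poly 1 (pp R n).

Lemma a0_neq0 (R : realType) n : (au R n).1.[0] != 0.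
Proof.
rewrite (au_0 R n).1 mulf_neq0 ?signr_eq0 // pnatr_eq0 addn1 //.
Qed.

Lemma pp_decomp (R : realType) n : pp R n = 1 + gg R n * 'X.
Proof.
rewrite /gg -{1}(poly_take_drop 1 (pp R n)) expr1; congr (_ + _).
rewrite (size1_polyC (size_take_poly _ _)) coef_take_poly /= -horner_coef0.
by rewrite /pp hornerZ mulVf ?a0_neq0.
Qed.

Lemma gg_size (R : realType) n : (size (gg R n) <= n)%N.
Proof.
rewrite /gg size_drop_poly leq_subLR add1n.
exact: leq_trans (size_scale_leq _ _) (au_size R n).1.
Qed.

Lemma pp_key (R : realType) n :
  pp R n * 'X * pp R n =
  (((2 * n + 1)%:R ^+ 2)^-1 : R)%:P *
    (1 - (au R n).2 * (au R n).2 + (au R n).2 * 'X * (au R n).2).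
Proof.
have Hid := au_id R n.
rewrite /pp -!mul_polyC (au_0 R n).1.
move: ((au R n).1) ((au R n).2) Hid => a u Hid.
have -> : ((2 * n + 1)%:R ^+ 2)^-1 = ((-1) ^+ n * (2 * n + 1)%:R)^-1 ^+ 2 :> R.
  by rewrite exprVn exprMn -exprM mulnC exprM sqrr_sign mul1r.
rewrite rmorphXn /=.
set c := ((-1) ^+ n * (2 * n + 1)%:R)^-1.
have E : 1 - u * u + u * 'X * u = 'X * a ^+ 2 + (1 - 'X) * u ^+ 2 - u * u + u * 'X * u.
  by rewrite Hid.
rewrite E; ring.
Qed.
Definition qf (R : realType) m (x : 'cV[R]_m) : R := (x^T *m x) 0 0.

Lemma qfE (R : realType) m (x : 'cV[R]_m) : qf x = \sum_(i < m) x i 0 ^+ 2.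
Proof. by rewrite /qf mxE; apply: eq_bigr => i _; rewrite mxE expr2. Qed.

Lemma qf_ge0 (R : realType) m (x : 'cV[R]_m) : 0 <= qf x.
Proof. by rewrite qfE sumr_ge0 // => i _; rewrite sqr_ge0. Qed.

Lemma vnorm_sq (R : realType) m (x : 'cV[R]_m) : vnorm x ^+ 2 = qf x.
Proof. by rewrite /vnorm -qfE sqr_sqrtr ?qf_ge0. Qed.

Lemma vnorm_ge0 (R : realType) m (x : 'cV[R]_m) : 0 <= vnorm x.
Proof. exact: sqrtr_ge0. Qed.

Lemma qfZ (R : realType) m a (x : 'cV[R]_m) : qf (a *: x) = a ^+ 2 * qf x.
Proof.
rewrite !qfE mulr_sumr; apply: eq_bigr => i _; rewrite mxE; ring.
Qed.

Lemma qf_eq0 (R : realType) m (x : 'cV[R]_m) : qf x = 0 -> x = 0.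
Proof.
rewrite qfE => /eqP; rewrite psumr_eq0 => [/allP H|i _]; last exact: sqr_ge0.
apply/matrixP => i j; rewrite ord1 mxE.
by have /(_ (mem_index_enum i)) := H i; rewrite implyTb sqrf_eq0 => /eqP.
Qed.

Lemma coord_le1 (R : realType) m (x : 'cV[R]_m) i : vnorm x <= 1 -> `|x i 0| <= 1.
Proof.
move=> H.
have H1 : x i 0 ^+ 2 <= 1.
  have : vnorm x ^+ 2 <= 1 by rewrite -(expr1n _ 2) lerXn2r // ?nnegrE ?vnorm_ge0.
  rewrite vnorm_sq qfE; apply: le_trans.
  by rewrite (bigD1 i) //= lerDl sumr_ge0 // => j _; rewrite sqr_ge0.
rewrite -real_normK ?num_real // in H1.
by have := normr_ge0 (x i 0); nra.
Qed.

Lemma spec_ub (R : realType) m (B : 'M[R]_m) :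
  has_sup [set vnorm (B *m x) | x in [set x : 'cV[R]_m | vnorm x <= 1]].
Proof.
split; first by exists (vnorm (B *m 0)), 0 => //=; rewrite /vnorm big1 ?sqrtr0 // => i _; rewrite mxE expr0n.
set b := fun i : 'I_m => \sum_(j < m) `|B i j|.
exists (Num.sqrt (\sum_(i < m) b i ^+ 2)) => _ [x /= Hx <-].
rewrite /vnorm ler_sqrt; last by rewrite sumr_ge0 // => i _; rewrite sqr_ge0.
apply: ler_sum => i _; rewrite mxE.
have Hb : `|\sum_(j < m) B i j * x j 0| <= b i.
  apply: le_trans (ler_norm_sum _ _ _) _; apply: ler_sum => j _.
  by rewrite normrM ler_piMr // coord_le1.
rewrite -real_normK ?num_real //.
have := normr_ge0 (\sum_(j < m) B i j * x j 0); nra.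
Qed.

Lemma spec_bound (R : realType) m (B : 'M[R]_m) (y : 'cV[R]_m) :
  qf (B *m y) <= specnorm B ^+ 2 * qf y.
Proof.
have Hsup := sup_upper_bound (spec_ub B).
have HS : forall x : 'cV[R]_m, vnorm x <= 1 -> vnorm (B *m x) <= specnorm B.
  by move=> x Hx; apply: Hsup; exists x.
have [/qf_eq0 ->|Hq] := eqVneq (qf y) 0.
  by rewrite mulmx0 /qf !mxE !big1 ?mulr0 // => i _; rewrite !mxE mul0r.
have qpos : 0 < qf y by rewrite lt_def Hq qf_ge0.
set s := vnorm y.
have spos : 0 < s by rewrite /s /vnorm -qfE sqrtr_gt0.
have Hx : vnorm (s^-1 *: y) <= 1.
  rewrite /vnorm -qfE qfZ -vnorm_sq -/s -exprMn mulVf ?gt_eqF // expr1n sqrtr1 //.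
have := HS _ Hx.
rewrite -scalemxAr => H.
have H0 : 0 <= vnorm (s^-1 *: (B *m y)) := vnorm_ge0 _.
have H2 : vnorm (s^-1 *: (B *m y)) ^+ 2 <= specnorm B ^+ 2.
  by rewrite lerXn2r // nnegrE (le_trans H0).
rewrite vnorm_sq qfZ in H2.
rewrite -[qf y]vnorm_sq -/s.
have H3 : s ^+ 2 * (s^-1 ^+ 2 * qf (B *m y)) <= s ^+ 2 * specnorm B ^+ 2.
  by rewrite ler_pM2l // exprn_gt0.
by move: H3; rewrite mulrA -exprMn divff ?gt_eqF // expr1n mul1r mulrC.
Qed.
Definition vs (R : realType) m (B : 'M[R]_m) (v : 'cV[R]_m) (j : nat) : 'cV[R]_m :=
  match j with
  | 0 => 0
  | 1 => v
  | j'.+2 => if odd j' then B *m ((B^T *m B) ^+ (j'./2) *m (B^T *m v))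
             else (B^T *m B) ^+ (j'./2) *m (B^T *m v)
  end.

Definition cf (R : realType) (Rad : R) n (j : nat) : R :=
  match j with
  | j'.+2 => if odd j' then 0 else - (gg R n)`_(j'./2) / Rad ^+ (j' + 2)
  | _ => 0
  end.

Definition Alg (R : realType) (Rad : R) k : algorithm R :=
  fun m B v j => \sum_(i < j.+1) cf Rad k./2 i *: vs B v i.

Lemma Alg_lin (R : realType) (Rad : R) k : in_A_lin (Alg Rad k).
Proof.
move=> m B v; exists (vs B v); split => //.
- case=> [|[|j']] // _; exists j'.+1 => //.
  case: j' => [|j'] /=.
    by right; rewrite expr0 mul1mx.
  rewrite uphalf_half; case: (odd j') => /=.
    right; rewrite add1n exprS.
    change (B^T *m B *m (B^T *m B) ^+ j'./2 *m (B^T *m v) = B^T *m (B *m ((B^T *m B) ^+ j'./2 *m (B^T *m v)))).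
    by rewrite !mulmxA.
  by left; rewrite add0n.
- by move=> k'; exists (fun i : 'I_k'.+1 => cf Rad k./2 i).
Qed.
Lemma reindex (R : realType) (Rad : R) n m (B : 'M[R]_m) v j :
  \sum_(i < j.+1) cf Rad n i *: vs B v i =
  \sum_(i < j./2) (- (gg R n)`_i / Rad ^+ (2 * i + 2)) *:
      ((B^T *m B) ^+ i *m (B^T *m v)).
Proof.
elim: j => [|j IH]; first by rewrite big_ord1 big_ord0 /= scale0r.
rewrite big_ord_recr IH /=.
case: j IH => [|j'] IH /=; first by rewrite scale0r addr0.
rewrite uphalf_half.
case Ho: (odd j') => /=.
  by rewrite scale0r addr0 add1n.
rewrite add0n [in RHS]big_ord_recr /=; congr (_ + _).
have -> : (j' + 2 = 2 * j'./2 + 2)%N.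
  by rewrite -{1}(odd_double_half j') Ho add0n -muln2 mulnC.
by [].
Qed.
Lemma horner_sym (R : realType) m' (P : 'M[R]_m'.+1) p :
  P^T = P -> (horner_mx P p)^T = horner_mx P p.
Proof.
move=> HP; elim/poly_ind: p => [|p c IH]; first by rewrite rmorph0 trmx0.
rewrite rmorphD rmorphM /= horner_mx_X horner_mx_C linearD /= tr_scalar_mx.
rewrite -mulmxE trmx_mul IH HP; congr (_ + _).
exact: (comm_mx_horner p (erefl : comm_mx P P)).
Qed.

Lemma horner_sum (R : realType) m' (P : 'M[R]_m'.+1) (g : {poly R}) n :
  (size g <= n)%N -> horner_mx P g = \sum_(i < n) g`_i *: P ^+ i.
Proof.
move=> Hs.
have E : g = \sum_(i < n) g`_i *: 'X^i.
  rewrite -poly_def; apply/polyP => i; rewrite coef_poly.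
  by case: ltnP => // H; rewrite nth_default // (leq_trans Hs H).
rewrite {1}E rmorph_sum /=; apply: eq_bigr => i _.
by rewrite linearZ /= rmorphXn /= horner_mx_X.
Qed.
Lemma main_bound (R : realType) (Rad : R) n m' (B : 'M[R]_m'.+1) (zs : 'cV[R]_m'.+1) :
  0 < Rad -> (forall y, qf (B *m y) <= Rad ^+ 2 * qf y) ->
  qf (B *m (\sum_(i < n) (- (gg R n)`_i / Rad ^+ (2 * i + 2)) *:
        ((B^T *m B) ^+ i *m (B^T *m (B *m zs)))) - B *m zs)
  <= Rad ^+ 2 * (((2 * n + 1)%:R ^+ 2)^-1 * qf zs).
Proof.
move=> Rpos HB.
have Rn0 : Rad != 0 by rewrite gt_eqF.
set C := Rad^-1 *: B.
have EB : B = Rad *: C by rewrite /C scalerA divff // scale1r.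
set P := C^T *m C.
have HP : P^T = P by rewrite /P trmx_mul trmxK.
have HC : forall y, qf (C *m y) <= qf y.
  move=> y; rewrite /C -scalemxAl qfZ exprVn ler_pdivrMl ?exprn_gt0 //.
set G := horner_mx P (gg R n).
have EBB : B^T *m B = Rad ^+ 2 *: P.
  by rewrite EB linearZ /= [(Rad *: C)^T]linearZ /= -scalemxAl scalerA /P expr2.
have Esum : \sum_(i < n) (- (gg R n)`_i / Rad ^+ (2 * i + 2)) *:
        ((B^T *m B) ^+ i *m (B^T *m (B *m zs))) = - (G *m P) *m zs.
  rewrite /G (horner_sum P (gg_size R n)) mulNmx !mulmx_suml -sumrN.
  apply: eq_bigr => i _.
  rewrite [B^T *m (B *m zs)]mulmxA EBB exprZn -!scalemxAl -scalemxAr !scalerA -scaleNr -mulmxA.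
  congr (_ *: _).
  rewrite exprD exprM; field.
  by rewrite Rn0 !expf_neq0.
  by rewrite /P !mulmxA.
rewrite Esum.
set U := horner_mx P (au R n).2.
set W := horner_mx P (pp R n).
have Eres : B *m (- (G *m P) *m zs) - B *m zs = - Rad *: (C *m (W *m zs)).
  rewrite /W (pp_decomp R n) rmorphD rmorph1 rmorphM /= horner_mx_X -/G EB.
  rewrite -!scalemxAl -mulmxE mulmxDl mul1mx mulmxDr.
  by rewrite !scalerA mulNr mulfV // scaleN1r !scale1r mulNmx mulmxN opprD addrC.
rewrite Eres qfZ sqrrN ler_pM2l ?exprn_gt0 //.
have HU : U^T = U by rewrite horner_sym.
have HW : W^T = W by rewrite horner_sym.
have Hk := congr1 (horner_mx P) (pp_key R n).
set c2 := ((2 * n + 1)%:R ^+ 2)^-1 : R in Hk *.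
rewrite !rmorphM !rmorphD !rmorphN rmorph1 !rmorphM /= horner_mx_X horner_mx_C -/U -/W in Hk.
have E1 : (C *m (W *m zs))^T *m (C *m (W *m zs)) = zs^T *m (W * P * W) *m zs.
  by rewrite -!mulmxE !trmx_mul HW /P !mulmxA.
have E2 : zs^T *m (W * P * W) *m zs =
   c2 *: (zs^T *m zs - (U *m zs)^T *m (U *m zs) + (C *m (U *m zs))^T *m (C *m (U *m zs))).
  rewrite Hk -mulmxE mul_scalar_mx -scalemxAr -scalemxAl; congr (_ *: _).
  rewrite mulmxDr mulmxBr mulmxDl mulmxBl (mulmx1 zs^T) !trmx_mul HU /P !mulmxA. done.
have : qf (C *m (W *m zs)) = c2 * (qf zs - qf (U *m zs) + qf (C *m (U *m zs))).
  by rewrite /qf E1 E2 !mxE.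
move=> ->.
have c2pos : 0 < c2 by rewrite /c2 invr_gt0 exprn_gt0 // ltr0n addn1.
rewrite ler_pM2l //.
have := HC (U *m zs); lra.
Qed.

Theorem lemma4 (R : realType) (Rad Dia : R) (k : nat) :
  0 < Rad -> 0 < Dia ->
  exists A : algorithm R, in_A_lin A /\
    forall (m : nat) (B : 'M[R]_m) (zstar v : 'cV[R]_m),
      (1 <= m)%N ->
      specnorm B <= Rad ->
      v = B *m zstar ->
      vnorm zstar <= Dia ->
      vnorm (B *m A m B v k - v) ^+ 2
        <= Rad ^+ 2 * Dia ^+ 2 / ((2 * k./2 + 1)%:R) ^+ 2.
Proof.
move=> Rpos Dpos; exists (Alg Rad k); split; first exact: Alg_lin.
move=> [//|m'] B zs v _ HS Hv HD.
rewrite /Alg reindex Hv vnorm_sq.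
have S0 : 0 <= specnorm B.
  apply: le_trans (vnorm_ge0 (B *m 0)) _; apply: (sup_upper_bound (spec_ub B)).
  exists 0 => //=; rewrite /vnorm big1 ?sqrtr0 ?ler01 // => i _; by rewrite mxE expr0n.
have HB : forall y, qf (B *m y) <= Rad ^+ 2 * qf y.
  move=> y; apply: le_trans (spec_bound B y) _; rewrite ler_wpM2r ?qf_ge0 //.
  by rewrite lerXn2r // nnegrE (le_trans S0).
apply: le_trans (main_bound k./2 zs Rpos HB) _.
have Hz : qf zs <= Dia ^+ 2.
  by rewrite -vnorm_sq lerXn2r // nnegrE ?vnorm_ge0 // ltW.
have Npos : 0 < ((2 * k./2 + 1)%:R ^+ 2)^-1 :> R.
  by rewrite invr_gt0 exprn_gt0 // ltr0n addn1.
rewrite -mulrA ler_pM2l ?exprn_gt0 // mulrC ler_pM2r //.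
Qed.
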